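(* Let $k\ge2$, $q\in\{0,\dots,k-2\}$, $1\le\ell_1,\ell_2\le k-1$ and $\alpha\in\mathfrak{S}_k^0$ be fixed. Then $$\#\big\{\varphi\in\mathfrak{S}_k^0:\ \big|c^{-1}\varphi^{-1}\alpha^{-1}c\,(\ell_2\ k-1)(1\ \ell_1)\,\varphi\big|=q\big\}\le\frac{k^{4q}}{(2q)!}.$$
   Context: $\mathfrak{S}_k$ is the symmetric group on $\{1,\dots,k\}$, products are compositions (applied right to left), and $\mathfrak{S}_k^0:=\{\varphi\in\mathfrak{S}_k:\varphi(1)=1,\ \varphi(k)=k\}$. $c$ is the cycle $(1\,2\,\cdots\,k)$, i.e. $c(i)=i+1$ for $i<k$ and $c(k)=1$. For $x\ne y$, $(x\,y)$ is the transposition exchanging $x,y$; $(x\,x)$ denotes the identity. For $\sigma\in\mathfrak{S}_k$, $|\sigma|$ is the minimal number of transpositions needed to write $\sigma$ as a product of transpositions. *)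

(* Defs.v *)
(* Points {1,...,k} of the paper are encoded as 'I_k via i |-> i-1. *)
From HB Require Import structures.
From mathcomp Require Import all_boot all_order all_fingroup.
Set Implicit Arguments. Unset Strict Implicit. Unset Printing Implicit Defensive.
Local Open Scope group_scope.

(* The long cycle c = (1 2 ... k): i |-> i+1, k |-> 1 (0-indexed: i |-> i+1 mod k). *)
Definition cyc (k : nat) : 'S_k := perm (@ordS_inj k).

(* The transposition (x y) of the paper, given 1-indexed points x y in {1..k};
   (x x) is the identity (tperm x x = 1).  Out-of-range inputs give 1
   (never happens under the hypotheses of the theorem). *)
Definition tp (k x y : nat) : 'S_k :=
  match insub x.-1, insub y.-1 with
  | Some a, Some b => tperm a b
  | _, _ => 1
  end.

Definition S0 (k : nat) (phi : 'S_k) : bool :=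
  [forall x : 'I_k, ((val x == 0) || (val x == k.-1)) ==> (phi x == x)].

Definition prod_of_transp (k m : nat) (sigma : 'S_k) : bool :=
  [exists s : m.-tuple ('I_k * 'I_k),
     all (fun p => p.1 != p.2) s && (\prod_(p <- s) tperm p.1 p.2 == sigma)].

Definition tlen_eq (k : nat) (sigma : 'S_k) (m : nat) : bool :=
  prod_of_transp m sigma && [forall j : 'I_m, ~~ prod_of_transp j sigma].

(* Main.v *)
Require Import Defs.
From HB Require Import structures.
From mathcomp Require Import all_boot all_order all_fingroup.
From mathcomp Require Import zify.
Local Open Scope group_scope.

Lemma prod_conj (k m : nat) (s g : 'S_k) :
  prod_of_transp m s -> prod_of_transp m (s ^ g).
Proof.
case/existsP=> t /andP[Ht /eqP <-].
apply/existsP; exists [tuple of map (fun p : 'I_k * 'I_k => (g p.1, g p.2)) t].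
apply/andP; split.
  rewrite /= all_map; apply/allP=> p Hp /=.
  by rewrite (inj_eq perm_inj); move/allP: Ht => /(_ p Hp).
apply/eqP; rewrite /= big_map; case: t {Ht} => /= t _.
elim: t => [|p t IH]; first by rewrite !big_nil conj1g.
by rewrite !big_cons conjMg IH tpermJ.
Qed.

Lemma card_transp (k m : nat) :
  (#|[set s : 'S_k | prod_of_transp m s]| <= k ^ (2 * m))%N.
Proof.
have -> : [set s : 'S_k | prod_of_transp m s] =
  (fun t : m.-tuple ('I_k * 'I_k) => \prod_(p <- t) tperm p.1 p.2) @:
     [set t : m.-tuple ('I_k * 'I_k) | all (fun p : 'I_k * 'I_k => p.1 != p.2) t].
  apply/setP=> s; rewrite inE; apply/existsP/imsetP.
    by case=> t /andP[H1 /eqP <-]; exists t => //; rewrite !inE.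
  by case=> t; rewrite !inE => H1 ->; exists t; rewrite H1 eqxx.
apply: leq_trans (leq_imset_card _ _) _.
apply: leq_trans (subset_leq_card (subsetT _)) _.
by rewrite cardsT card_tuple card_prod card_ord mulnn -expnM mulnC.
Qed.

Lemma prod_bound (k n : nat) : forall a, (0 < a)%N -> (a + (a + n) <= (2 * k).+1)%N ->
  (\prod_(a <= i < a + n) i <= k ^ n)%N.
Proof.
elim: n {-2}n (leqnn n) => [|N IH] n Hn a Ha Hs.
  by move: Hn; rewrite leqn0 => /eqP ->; rewrite addn0 big_geq.
case: n Hn Hs => [|[|n]] Hn Hs.
- by rewrite addn0 big_geq.
- by rewrite addn1 big_nat1 expn1; lia.
rewrite big_ltn; last by lia.
rewrite (addnS a n.+1) big_nat_recr /=; last by lia.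
have H := IH n ltac:(lia) a.+1 ltac:(lia) ltac:(lia).
rewrite addSnnS in H.
rewrite !expnS mulnA.
have Hab : (a * (a + n.+1) <= k * k)%N by nia.
by rewrite mulnAC mulnA; apply: leq_mul.
Qed.

Lemma cyc_centr k (u : 'S_k) (z : 'I_k) : val z = 0%N -> u z = z ->
  cyc k * u = u * cyc k -> u = 1.
Proof.
move=> Hz Huz Hcu; apply/permP => x; rewrite perm1.
suff H : forall n (y : 'I_k), val y = n -> u y = y by exact: H.
elim=> [|n IH] y Hy.
  by have -> : y = z by apply: val_inj; rewrite Hy Hz.
have Hn : (n < k)%N by case: y Hy => /= m Hm Hy; lia.
pose y' := Ordinal Hn.
have Hc : cyc k y' = y.
  apply: val_inj; rewrite /cyc permE /= modn_small; first by []. by case: (y) Hy => /= m Hm <-.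
rewrite -Hc.
have := congr1 (fun p : 'S_k => p y') Hcu; rewrite /= !permM => ->.
by rewrite IH.
Qed.

Theorem lemma6 (k q l1 l2 : nat) (alpha : 'S_k)
  (hk : 2 <= k) (hq : q <= k - 2)
  (hl1 : 1 <= l1 <= k - 1) (hl2 : 1 <= l2 <= k - 1)
  (halpha : S0 alpha) :
  (#|[set phi : 'S_k | S0 phi &&
      tlen_eq (phi * tp k 1 l1 * tp k l2 (k - 1) * cyc k * alpha^-1
               * phi^-1 * (cyc k)^-1) q]| * (2 * q)`! <= k ^ (4 * q))%N.
Proof.
set A := [set phi : 'S_k | _].
set M := tp k 1 l1 * tp k l2 (k - 1) * cyc k * alpha^-1.
pose f := fun phi : 'S_k => M * (phi^-1 * (cyc k)^-1 * phi).
have k0 : (0 < k)%N by lia.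
pose z := Ordinal k0.
have S0z : forall phi, S0 phi -> phi z = z.
  move=> phi /forallP /(_ z) /implyP H; apply/eqP; apply: H; by rewrite eqxx.
have Hinj : {in A &, injective f}.
  move=> p1 p2; rewrite !inE => /andP[H1 _] /andP[H2 _] /mulgI E.
  have Hu : p1 * p2^-1 = 1.
    apply: (@cyc_centr k _ z) => //.
      by rewrite permM S0z // -{1}(S0z p2 H2) -permM mulgV perm1.
    have E' : (cyc k)^-1 * (p1 * p2^-1) = (p1 * p2^-1) * (cyc k)^-1.
      have := congr1 (fun x => p1 * x * p2^-1) E.
      by rewrite !mulgA mulgV mul1g -!mulgA mulgV mulg1.
    have := congr1 (fun x => cyc k * x * cyc k) E'.
    by rewrite !mulgA mulgV mul1g -!mulgA mulVg mulg1.
  by apply/eqP; rewrite eq_mulgV1 Hu.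
have H1 : (#|A| <= k ^ (2 * q))%N.
  rewrite -(card_in_imset Hinj).
  apply: leq_trans (card_transp k q).
  apply: subset_leq_card; apply/subsetP=> s /imsetP[phi Hphi ->].
  rewrite inE; move: Hphi; rewrite inE => /andP[_ /andP[Hp _]].
  have -> : f phi = (phi * tp k 1 l1 * tp k l2 (k - 1) * cyc k * alpha^-1
               * phi^-1 * (cyc k)^-1) ^ phi.
    by rewrite conjgE /f /M !mulgA mulVg mul1g.
  exact: prod_conj.
have H2 : ((2 * q)`! <= k ^ (2 * q))%N.
  rewrite fact_prod; have := @prod_bound k (2 * q) 1 isT ltac:(lia).
  by rewrite add1n.
have -> : (4 * q = 2 * q + 2 * q)%N by lia.
by rewrite expnD; apply: leq_mul.
Qed.
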